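(* Let $G$ be a finite group such that every nontrivial Sylow subgroup of $G/G'$ is noncyclic, and let $N$ be a normal subgroup of $G$ such that $\eta(G) = \eta(G/N)$. Then $N \le G'$.
   Context: All groups are finite. A cyclic subgroup $C$ of a group $G$ is maximal cyclic if there is no cyclic subgroup $D$ of $G$ with $C < D$. $\eta(G)$ denotes the number of conjugacy classes of maximal cyclic subgroups of $G$. $G'$ is the derived subgroup of $G$. *)

(* Defs.v *)
From mathcomp Require Import all_boot all_fingroup all_solvable.
Set Implicit Arguments. Unset Strict Implicit. Unset Printing Implicit Defensive.
Local Open Scope group_scope.

Definition max_cyclic_subgroups (gT : finGroupType) (G : {set gT})
  : {set {set gT}} :=
  [set C : {set gT} | [&& C \subset G, cyclic C &
     [forall D : {set gT}, ((D \subset G) && cyclic D) ==> ~~ (C \proper D)]]].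

Definition eta (gT : finGroupType) (G : {set gT}) : nat :=
  #|[set C :^: G | C in max_cyclic_subgroups G]|.

(* Main.v *)
Require Import Defs.
From mathcomp Require Import all_boot all_fingroup all_solvable.
Set Implicit Arguments. Unset Strict Implicit. Unset Printing Implicit Defensive.
Local Open Scope group_scope.

Section MC.
Variable gT : finGroupType.
Implicit Types G H : {group gT}.

Lemma maxcycP G (C : {set gT}) : reflect
  [/\ C \subset G, cyclic C &
     forall D : {set gT}, D \subset G -> cyclic D -> C \subset D -> D = C]
  (C \in max_cyclic_subgroups G).
Proof.
rewrite inE; apply: (iffP and3P) => [[sCG cC /forallP mC]|[sCG cC mC]].
  split=> // D sDG cD sCD; apply/eqP; rewrite eq_sym eqEproper sCD /=.
  by have := mC D; rewrite sDG cD.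
split=> //; apply/forallP => D; apply/implyP => /andP[sDG cD].
by apply/negP => /andP[sCD nDC]; move: nDC; rewrite (mC D sDG cD sCD) subxx.
Qed.

Lemma maxcycJ G (C : {set gT}) g : C \in max_cyclic_subgroups G -> g \in G ->
  C :^ g \in max_cyclic_subgroups G.
Proof.
case/maxcycP => sCG cC mC Gg; apply/maxcycP; split.
- by rewrite -(normsP (normG G) g Gg) conjSg.
- by case/cyclicP: cC => c ->; rewrite -cycleJ cycle_cyclic.
move=> D sDG cD sCD.
have cD' : cyclic (D :^ g^-1).
  by case/cyclicP: cD => d ->; rewrite -cycleJ cycle_cyclic.
have := mC (D :^ g^-1); rewrite -sub_conjgV cD'.
rewrite -(normsP (normG G) g^-1) ?groupV // conjSg invgK => /(_ sDG isT sCD) <-.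
by rewrite conjsgKV.
Qed.

Lemma maxcyc_exists G x : x \in G ->
  exists2 X, X \in max_cyclic_subgroups G & x \in X.
Proof.
move=> Gx.
pose P := fun X : {set gT} => [&& X \subset G, cyclic X & x \in X].
have P0 : P <[x]> by rewrite /P cycle_subG Gx cycle_cyclic cycle_id.
case: (@arg_maxnP _ <[x]> P (fun X => #|X|) P0) => X /and3P[sXG cX xX] mX.
exists X => //; apply/maxcycP; split=> // D sDG cD sXD.
apply/eqP; rewrite eq_sym eqEcard sXD /=.
by apply: mX; rewrite /P sDG cD (subsetP sXD).
Qed.


End MC.

Lemma self_class (gT : finGroupType) (G : {group gT}) (C : {set gT}) : C \in C :^: G.
Proof. by apply/imsetP; exists 1; rewrite ?group1 ?conjsg1. Qed.

Section MC2.
Variable gT : finGroupType.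
Implicit Types G H N : {group gT}.

Lemma fclass G H (C : {set gT}) : G \subset 'N(H) ->
  [set D / H | D in C :^: G] = (C / H) :^: (G / H).
Proof.
move=> nHG; apply/setP=> K; apply/imsetP/imsetP.
  case=> D /imsetP[g Gg ->] ->; exists (coset H g); first exact: mem_quotient.
  by rewrite quotientJ // (subsetP nHG).
case=> u /morphimP[g Ng Gg ->] ->; exists (C :^ g); first exact: imset_f.
by rewrite quotientJ.
Qed.


Lemma eta_quo G N : N <| G -> eta G = eta (G / N) ->
  (forall X, X \in max_cyclic_subgroups G -> X / N \in max_cyclic_subgroups (G / N))
  /\ (forall X Y, X \in max_cyclic_subgroups G -> Y \in max_cyclic_subgroups G ->
        X / N = Y / N -> Y \in X :^: G).
Proof.
move=> nNG EQ; have nG := normal_norm nNG.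
set T := [set C :^: G | C in max_cyclic_subgroups G].
set Tb := [set D :^: (G / N) | D in max_cyclic_subgroups (G / N)].
pose f := fun K : {set {set gT}} => [set D / N | D in K].
have sTb : Tb \subset f @: T.
  apply/subsetP => _ /imsetP[D MD ->]; have /maxcycP[sDG cD mD] := MD.
  case/cyclicP: (cD) => d defD.
  have : d \in G / N by rewrite (subsetP sDG) // defD cycle_id.
  case/morphimP => g Ng Gg dE.
  have [X MX gX] := maxcyc_exists Gg; have /maxcycP[sXG cX _] := MX.
  have XD : X / N = D.
    apply: mD; first exact: quotientS.
    - by case/cyclicP: cX => x ->; apply: quotient_cyclic; apply: cycle_cyclic.
    case/cyclicP: cX gX => x defX gX; rewrite defX in gX *.
    by rewrite defD; apply/subsetP => z /cycleP[k ->]; rewrite groupX // dE mem_quotient.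
  apply/imsetP; exists (X :^: G); first exact: imset_f.
  by rewrite /f fclass // XD.
have le1 : #|f @: T| <= #|T| := leq_imset_card _ _.
have eT : #|T| = #|Tb| := EQ.
have eqTb : Tb = f @: T by apply/eqP; rewrite eqEcard sTb -eT le1.
have injf : {in T &, injective f}.
  by apply/imset_injP; rewrite eqn_leq le1 /= eT eqTb.
split.
  move=> X MX; have : f (X :^: G) \in Tb by rewrite eqTb; apply: imset_f; apply: imset_f.
  rewrite /f fclass //; case/imsetP => D MD eqc.
  have := self_class [group of G / N] (X / N); rewrite /= eqc.
  by case/imsetP => u Gu ->; apply: maxcycJ.
move=> X Y MX MY XY.
have : f (X :^: G) = f (Y :^: G) by rewrite /f !fclass // XY.
move/injf => /(_ (imset_f _ MX) (imset_f _ MY)) ->; exact: self_class.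
Qed.

End MC2.

Theorem theorem1p2 (gT : finGroupType) (G N : {group gT}) :
  (forall (p : nat) (P : {group coset_of G^`(1)}),
      prime p -> P \in 'Syl_p(G / G^`(1)) -> P :!=: 1 -> ~~ cyclic P) ->
  N <| G ->
  eta G = eta (G / N) ->
  N \subset G^`(1).
Proof.
move=> hS nNG EQ; have [hA hB] := eta_quo nNG EQ.
set K := G^`(1).
have nKG : G \subset 'N(K) := normal_norm (der_normal 1 G).
have nN := normal_norm nNG; have sNG := normal_sub nNG.
have abG : abelian (G / K) by apply: sub_der1_abelian.
have key : forall X, X \in max_cyclic_subgroups G -> N / K \subset X / K.
  move=> X MX; have /maxcycP[sXG cX _] := MX.
  case/cyclicP: cX => x defX; rewrite defX in MX sXG *.
  have Gx : x \in G by rewrite -cycle_subG.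
  apply/subsetP => _ /morphimP[m Nm Nm' ->].
  have Gm := subsetP sNG m Nm'.
  have [Y MY xmY] := maxcyc_exists (groupM Gx Gm).
  have /maxcycP[sYG cY _] := MY.
  case/cyclicP: cY => y defY; rewrite defY in MY sYG xmY *.
  have YX : <[y]> / N = <[x]> / N.
    have /maxcycP[_ _ mX] := hA _ MX; apply: mX.
    - exact: quotientS.
    - by apply: quotient_cyclic; apply: cycle_cyclic.
    rewrite quotient_cycle ?(subsetP nN) // cycle_subG.
    have -> : coset N x = coset N (x * m).
      by rewrite morphM ?(subsetP nN) //= (coset_id Nm') mulg1.
    exact: mem_quotient.
  have /imsetP[g Gg defYg] := hB _ _ MX MY (esym YX).
  have YK : <[y]> / K = <[x]> / K.
    rewrite defYg quotientJ ?(subsetP nKG) //.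
    apply: (normsP (sub_abelian_norm abG (quotientS _ sXG))).
    exact: mem_quotient.
  have xmK : coset K (x * m) \in <[x]> / K by rewrite -YK mem_quotient.
  have xK : coset K x \in <[x]> / K by rewrite mem_quotient ?cycle_id.
  rewrite [coset_morphism _ _]/=.
  have -> : coset_morphism K m = (coset K x)^-1 * coset K (x * m).
    by rewrite morphM ?(subsetP nKG) // mulKg.
  by rewrite groupM ?groupV.
apply: contraT => nNK; have [m Nm mK] := subsetPn nNK.
have Nm1 : m \in 'N(K) := subsetP nKG m (subsetP sNG m Nm).
have ntb : coset K m != 1 by apply: contra mK => /eqP; apply: coset_idr.
set p := pdiv #[coset K m].
have pp : prime p by apply: pdiv_prime; rewrite order_gt1.
have bNK : coset K m \in N / K := mem_quotient _ Nm.
have pNK : p %| #|N / K| := dvdn_trans (pdiv_dvd _) (order_dvdG bNK).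
have [a aNK oa] := Cauchy pp pNK.
have sNKG : N / K \subset G / K := quotientS _ sNG.
have [P sylP] := Sylow_exists p (G / K).
have nPG : P <| G / K by rewrite -sub_abelian_normal ?(pHall_sub sylP).
have aP : a \in P.
  rewrite (mem_normal_Hall sylP nPG) ?(subsetP sNKG) //.
  by rewrite /p_elt oa pnat_id.
have ntP : P :!=: 1.
  apply: contraTneq aP => ->; rewrite inE -order_eq1 oa.
  by apply/eqP => p1; rewrite p1 in pp.
have sylP' : P \in 'Syl_p(G / G^`(1)) by rewrite inE.
have := hS p P pp sylP' ntP; move=> ncP; suff cP : cyclic P by rewrite cP in ncP.
have abP : abelian P := abelianS (pHall_sub sylP) abG.
rewrite abelian_rank1_cyclic // (rank_abelian_pgroup (pHall_pgroup sylP) abP).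
have sO : 'Ohm_1(P) \subset <[a]>.
  rewrite Ohm1Eprime gen_subG; apply/subsetP => c /setIdP[Pc pc].
  have oc : #[c] = p.
    have pe : p.-elt c := mem_p_elt (pHall_pgroup sylP) Pc.
    apply/eqP; have := pnatPpi pe; apply.
    by rewrite mem_primes pc order_gt0 dvdnn.
  have : c \in G / K := subsetP (pHall_sub sylP) c Pc.
  case/morphimP => h Nh Gh ch; rewrite ch /= in oc *.
  have [X MX hX] := maxcyc_exists Gh.
  have sNX := key X MX.
  have /maxcycP[_ cX _] := MX.
  case/cyclicP: cX => x defX; rewrite defX in sNX hX.
  have cXK : cyclic (<[x]> / K) by apply: quotient_cyclic; apply: cycle_cyclic.
  have hXK : coset K h \in <[x]> / K := mem_quotient _ hX.
  have aXK : a \in <[x]> / K := subsetP sNX a aNK.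
  have := eq_subG_cyclic cXK.
  move=> /(_ <[coset K h]> <[a]>); rewrite !cycle_subG hXK aXK -!orderE oa.
  rewrite oc => /(_ isT isT) E.
  have /eqP <- : <[coset K h]> == <[a]> by rewrite E.
  exact: cycle_id.
have := dvdn_leq_log p (order_gt0 a) (cardSg sO : #|'Ohm_1(P)| %| #[a]).
rewrite oa (@logn_prime p p pp) => H; apply: leq_trans H _; by case: eqP.
Qed.
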